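(* Let $G$ be a directed acyclic graph with $n$ vertices, let $s,t\in V(G)$, and let $k=\operatorname{fvs}(G)$. Then the number of distinct directed $s$-$t$ paths in $G$ is at most $k^k n^{\mathcal{O}(k)}$.
   Context: $\operatorname{fvs}(G)$ denotes the minimum size of a feedback vertex set of the underlying undirected graph of $G$, i.e., the minimum number of vertices whose removal makes the underlying undirected graph a forest. *)

(* Defs.v *)
From mathcomp Require Import all_boot.
Set Implicit Arguments. Unset Strict Implicit. Unset Printing Implicit Defensive.

Definition dag (T : finType) (e : rel T) : Prop :=
  forall x y, e x y -> ~~ connect e y x.

Definition uadj (T : finType) (e : rel T) : rel T :=
  fun u v => (u != v) && (e u v || e v u).

(* The underlying undirected graph minus S is a forest: it has no cycle, i.e.
   no sequence of >= 3 distinct vertices outside S, cyclically adjacent. *)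
Definition is_fvs (T : finType) (e : rel T) (S : {set T}) : Prop :=
  forall c : seq T, 3 <= size c -> all (fun v => v \notin S) c ->
    ~~ ucycleb (uadj e) c.

Definition fvs_is (T : finType) (e : rel T) (k : nat) : Prop :=
  (exists2 S : {set T}, is_fvs e S & #|S| = k) /\
  (forall S : {set T}, is_fvs e S -> k <= #|S|).

(* A directed s-t path, given as the list of vertices after s. *)
Definition st_path (T : finType) (e : rel T) (s t : T) (p : seq T) : bool :=
  [&& path e s p, last s p == t & uniq (s :: p)].

(* Main.v *)
Require Import Defs.
From mathcomp Require Import all_boot zify.
Set Implicit Arguments. Unset Strict Implicit. Unset Printing Implicit Defensive.

Lemma uadj_sym (T : finType) (e : rel T) u v : uadj e u v = uadj e v u.
Proof. by rewrite /uadj eq_sym orbC. Qed.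

Lemma cyc (T : finType) (e : rel T) (S : {set T}) x a b r1 r2 :
 is_fvs e S -> a != b -> uniq (x :: a :: r1) -> uniq (x :: b :: r2) ->
 path (uadj e) x (a :: r1) -> path (uadj e) x (b :: r2) ->
 last a r1 = last b r2 -> all (fun v => v \notin S) (x :: a :: r1) ->
 all (fun v => v \notin S) (x :: b :: r2) -> False.
Proof.
move=> fvs ab uA uB pA pB lAB nA nB.
set A := a :: r1 in uA pA nA lAB *. set B := b :: r2 in uB pB nB lAB *.
have hasB : has (mem A) B.
  apply/hasP; exists (last b r2).
    exact: mem_last.
  by rewrite -lAB; exact: mem_last.
set i := find (mem A) B.
have ilt : i < size B by rewrite -has_find.
set z := nth x B i.
have zA : z \in A by exact: (nth_find x hasB).
set j := index z A.
have jlt : j < size A by rewrite index_mem.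
set P1 := take j.+1 A. set P2 := take i B.
have P2A : ~~ has (mem A) P2 by rewrite /P2 has_take // ltnn.
have xA : x \notin A by case/andP: uA.
have xB : x \notin B by case/andP: uB.
have uA' : uniq A by case/andP: uA.
have uB' : uniq B by case/andP: uB.
have lastP1 : last x P1 = z by rewrite /P1 (take_nth x) // last_rcons nth_index.
have pathP1 : path (uadj e) x P1.
  by move: pA; rewrite -(cat_take_drop j.+1 A) cat_path => /andP[].
have pathB' : path (uadj e) x (rcons P2 z).
  by move: pB; rewrite -(cat_take_drop i.+1 B) cat_path (take_nth x) // => /andP[].
have pathP2 : path (uadj e) z (rcons (rev P2) x).
  have E : path (uadj e) x (rcons P2 z) = path (fun y w => uadj e w y) x (rcons P2 z).
    by apply: eq_path => u v; rewrite uadj_sym.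
  by move: pathB'; rewrite E -rev_path last_rcons belast_rcons rev_cons.
have sz : 0 < j + i.
  case: (posnP i) => [i0|]; last by rewrite addn_gt0 orbC => ->.
  have zb : z = b by rewrite /z i0.
  by rewrite i0 addn0 /j zb /A /= (negbTE ab).
set c := x :: P1 ++ rev P2.
have hsz : 3 <= size c.
  by rewrite /c [size (_ :: _)]/= size_cat size_rev !size_takel // ?(ltnW ilt) // addSn !ltnS.
have hall : all (fun v => v \notin S) c.
  apply/allP => v; rewrite /c inE mem_cat mem_rev => /orP[/eqP ->|/orP[] /mem_take vin].
  - by move: nA => /= /andP[].
  - by move/allP: nA; apply; rewrite inE vin orbT.
  - by move/allP: nB; apply; rewrite inE vin orbT.
move: (fvs c hsz hall); apply/negP.
have -> : ucycleb (uadj e) c = path (uadj e) x (rcons (P1 ++ rev P2) x) && uniq c by [].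
rewrite rcons_cat cat_path pathP1 lastP1 pathP2 /c cons_uniq.
rewrite mem_cat mem_rev negb_or cat_uniq rev_uniq !take_uniq //.
have -> : x \in P1 = false by apply/negbTE; apply/negP => /mem_take; apply/negP.
have -> : x \in P2 = false by apply/negbTE; apply/negP => /mem_take; apply/negP.
rewrite andbT /=.
rewrite negbK andbT; apply/hasP => -[y]; rewrite mem_rev => yP2 /mem_take yA.
by move/hasP: P2A; apply; exists y.
Qed.

Lemma last_notin (T : eqType) (x : T) r : x \notin r -> last x r = x -> r = [::].
Proof.
case: r => // b r xn lx; move: xn; rewrite -lx.
by have := mem_last b r; rewrite /= => ->.
Qed.

Lemma forest_uniq (T : finType) (e : rel T) (S : {set T}) : is_fvs e S ->
  forall x r1 r2, uniq (x :: r1) -> uniq (x :: r2) ->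
  path (uadj e) x r1 -> path (uadj e) x r2 -> last x r1 = last x r2 ->
  all (fun v => v \notin S) (x :: r1) -> all (fun v => v \notin S) (x :: r2) -> r1 = r2.
Proof.
move=> fvs x r1; elim: r1 x => [|a r1 IH] x r2 u1 u2 p1 p2 l n1 n2.
  by apply/esym/(last_notin (x := x)) => //; case/andP: u2.
case: r2 u2 p2 l n2 => [|b r2] u2 p2 l n2.
  by apply: (last_notin (x := x)) => //; case/andP: u1.
case: (eqVneq a b) => [ab|ab].
  subst b; congr (_ :: _); apply: (IH a).
  - by case/andP: u1.
  - by case/andP: u2.
  - by case/andP: p1.
  - by case/andP: p2.
  - exact: l.
  - by case/andP: n1.
  - by case/andP: n2.
exfalso; exact: (cyc fvs ab u1 u2 p1 p2 l n1 n2).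
Qed.

Fixpoint enc (T : finType) (S : {set T}) (x : T) (A : seq T) (r : seq T)
  : seq (T * seq T) :=
  match r with
  | [::] => [:: (x, A)]
  | v :: r' => if v \in S then (x, A) :: enc S v [::] r' else enc S x (rcons A v) r'
  end.

Definition dec (T : Type) (L : seq (T * seq T)) : seq T :=
  flatten [seq p.1 :: p.2 | p <- L].

Lemma decK (T : finType) (S : {set T}) x A r : dec (enc S x A r) = x :: A ++ r.
Proof.
elim: r x A => [|v r IH] x A /=; first by rewrite /dec /= !cats0.
case: ifP => _; last by rewrite IH cat_rcons.
by rewrite /dec /= -/(dec _) IH.
Qed.

Lemma size_enc (T : finType) (S : {set T}) x A r :
  size (enc S x A r) = (count (mem S) r).+1.
Proof.
elim: r x A => [|v r IH] x A //=.
by case: ifP => _ /=; rewrite IH.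
Qed.

Definition valid (T : finType) (e : rel T) (S : {set T}) (p : T * seq T) :=
  [&& uniq (p.1 :: p.2), path (uadj e) p.1 p.2 & all (fun v => v \notin S) p.2].

Lemma enc_valid (T : finType) (e : rel T) (S : {set T}) x A r :
  uniq (x :: A ++ r) -> path (uadj e) x (A ++ r) -> all (fun v => v \notin S) A ->
  all (valid e S) (enc S x A r).
Proof.
elim: r x A => [|v r IH] x A.
  by rewrite cats0 => u p n; rewrite /= /valid u p n.
move=> u p n.
have u1 : uniq (x :: A) by move: u; rewrite -cat_cons cat_uniq => /andP[].
have u2 : uniq (v :: r) by move: u; rewrite -cat_cons cat_uniq => /and3P[].
have p1 : path (uadj e) x A by move: p; rewrite cat_path => /andP[].
have p2 : path (uadj e) v r by move: p; rewrite cat_path => /andP[_] /= /andP[].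
rewrite /=; case: ifP => vS.
  by rewrite /= IH // /valid u1 p1 n.
by rewrite IH ?cat_rcons // all_rcons vS n.
Qed.

Definition compress (T : Type) (p : T * seq T) := (p.1, head p.1 p.2, last p.1 p.2).

Lemma compress_inj (T : finType) (e : rel T) (S : {set T}) : is_fvs e S ->
  forall L1 L2, all (valid e S) L1 -> all (valid e S) L2 ->
  map (@compress T) L1 = map (@compress T) L2 -> L1 = L2.
Proof.
move=> fvs; elim=> [|[y B] L1 IH] [|[y' B'] L2] //= /andP[v1 a1] /andP[v2 a2] [ey eh el eL].
subst y'; congr (_ :: _); last exact: IH.
congr (_, _).
move: v1 v2 eh el; rewrite /valid /=.
case: B => [|b C]; case: B' => [|b' C'] //=.
- move=> _ /and3P[/andP[yn _] _ _] eh; move: yn; by rewrite ?eh ?(esym eh) inE eqxx.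
- move=> /and3P[/andP[yn _] _ _] _ eh; move: yn; by rewrite ?eh ?(esym eh) inE eqxx.
move=> /and3P[/andP[_ u1] /andP[_ p1] n1] /and3P[/andP[_ u2] /andP[_ p2] n2] eb el.
subst b'; congr (_ :: _); exact: (forest_uniq fvs u1 u2 p1 p2 el n1 n2).
Qed.

Lemma e_to_uadj (T : finType) (e : rel T) x p :
  path e x p -> uniq (x :: p) -> path (uadj e) x p.
Proof.
elim: p x => [|v p IH] x //= /andP[exv pv] /andP[xn up].
rewrite IH // andbT /uadj exv /= andbT.
by apply/eqP => xv; move: xn; rewrite xv inE eqxx.
Qed.

Lemma optseq_eq (X : eqType) (s1 s2 : seq (option X)) :
  None \notin s1 -> None \notin s2 ->
  (forall i, nth None s1 i = nth None s2 i) -> s1 = s2.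
Proof.
elim: s1 s2 => [|a s1 IH] [|b s2] //=.
- by move=> _; rewrite inE negb_or => /andP[/negP nb _] /(_ 0) /= eb; case: nb; rewrite eb.
- by rewrite inE negb_or => /andP[/negP na _] _ /(_ 0) /= ea; case: na; rewrite ea.
rewrite !inE !negb_or => /andP[_ n1] /andP[_ n2] H.
congr (_ :: _); first exact: (H 0).
by apply: IH => // i; exact: (H i.+1).
Qed.

Lemma count_short (X : finType) m (L : seq (seq X)) :
  uniq L -> all (fun s => size s <= m) L -> size L <= (#|X|.+1) ^ m.
Proof.
move=> uL aL.
pose f := fun s : seq X => [ffun i : 'I_m => nth None (map Some s) i].
have inj : {in L &, injective f}.
  move=> s1 s2 i1 i2 /ffunP H.
  apply: (@inj_map _ _ (@Some X)); first by move=> ? ? [].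
  apply: optseq_eq.
  - by apply/mapP => -[].
  - by apply/mapP => -[].
  move=> i; case: (ltnP i m) => [im|mi].
    by have := H (Ordinal im); rewrite !ffunE.
  rewrite !nth_default // size_map.
  - by apply: leq_trans mi; move/allP: aL; apply.
  - by apply: leq_trans mi; move/allP: aL; apply.
have uf : uniq (map f L) by rewrite map_inj_in_uniq.
have := uniq_leq_size uf (s2 := enum {ffun 'I_m -> option X}) (fun x _ => mem_enum _ x).
by rewrite size_map -cardE card_ffun card_option card_ord.
Qed.

Lemma count_S (T : finType) (S : {set T}) p : uniq p -> count (mem S) p <= #|S|.
Proof.
move=> up; rewrite -size_filter cardE; apply: uniq_leq_size; first exact: filter_uniq.
by move=> x; rewrite mem_filter mem_enum => /andP[].
Qed.

Lemma big_n (T : finType) (e : rel T) k : fvs_is e k -> 0 < k -> 3 <= #|T|.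
Proof.
move=> [_ H] kpos; rewrite leqNgt; apply/negP => small.
have : is_fvs e set0.
  move=> c sc _; rewrite /ucycleb negb_and; apply/orP; right; apply/negP => uc.
  have := max_card (mem c); rewrite (card_uniqP uc) => /(leq_trans sc).
  by rewrite leqNgt small.
by move/H; rewrite cards0 leqNgt kpos.
Qed.

Theorem lemma2 :
  exists c : nat,
    forall (T : finType) (e : rel T) (s t : T) (k : nat),
      dag e -> fvs_is e k ->
      forall ps : seq (seq T),
        uniq ps -> all (st_path e s t) ps ->
        size ps <= k ^ k * #|T| ^ (c * k).
Proof.
exists 8 => T e s t k _ hk ps ups aps.
have [[S fS cS] _] := hk.
have stP : forall p, p \in ps -> [/\ uniq (s :: p), path (uadj e) s p & last s p = t].
  move=> p /(allP aps) /and3P[pp /eqP lp up]; split => //; exact: e_to_uadj.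
case: (posnP k) => [k0|kpos].
  rewrite k0 muln0 !expn0 muln1; move: cS; rewrite k0 => cS.
  move/eqP: cS; rewrite cards_eq0 => /eqP S0; subst S.
  have allS : forall p : seq T, all (fun v => v \notin set0) p.
    by move=> p; apply/allP => v _; rewrite in_set0.
  case: ps ups stP {aps} => [|p1 [|p2 ps]] //= /andP[nin _] stP.
  have [u1 q1 l1] := stP p1 (mem_head _ _).
  have [u2 q2 l2] : [/\ uniq (s :: p2), path (uadj e) s p2 & last s p2 = t] by apply: stP; rewrite !inE eqxx orbT.
  have e12 : p1 = p2.
    apply: (forest_uniq fS u1 u2 q1 q2); by rewrite ?l1 ?l2 ?allS.
  by move: nin; rewrite e12 inE eqxx.
pose sg := fun p : seq T => map (@compress T) (enc S s [::] p).
have inj : {in ps &, injective sg}.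
  move=> p1 p2 i1 i2 H.
  have [u1 q1 _] := stP p1 i1; have [u2 q2 _] := stP p2 i2.
  have : enc S s [::] p1 = enc S s [::] p2.
    apply: (compress_inj fS) H; exact: enc_valid.
  by move/(congr1 (@dec T)); rewrite !decK => -[].
have := @count_short (T * T * T)%type k.+1 (map sg ps).
rewrite map_inj_in_uniq // ups size_map => /(_ isT).
have -> : all (fun s0 : seq (T * T * T) => size s0 <= k.+1) [seq sg i | i <- ps].
  apply/allP => _ /mapP [p ip ->]; rewrite size_map size_enc ltnS -cS.
  by apply: count_S; have [/andP[] ] := stP p ip.
move/(_ isT) => H; apply: (leq_trans H).
have n3 := big_n hk kpos.
rewrite !card_prod.
set n := #|T| in n3 *.
have h1 : (n * n * n).+1 <= n ^ 4.
  rewrite (_ : n ^ 4 = n * (n * n * n)); last by rewrite !expnS expn0 muln1 !mulnA.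
  have : 0 < n * n * n by rewrite !muln_gt0 (leq_trans _ n3).
  move: (n * n * n) => m mpos.
  nia.
apply: (@leq_trans ((n ^ 4) ^ k.+1)); first by rewrite leq_exp2r.
rewrite -expnM; apply: (leq_trans (leq_pexp2l (m := n) _ (_ : 4 * k.+1 <= 8 * k))).
- lia.
- lia.
by apply: leq_pmull; rewrite expn_gt0 kpos.
Qed.
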